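(* Let $\lambda\in[0,\frac{\pi}{2})$ and let $(|B(\lambda)\rangle,\mathcal{M})$ be a maximally impossible quantum scenario with $|M_1|=|M_2|=N$ and $M_3=\{C_0,\dots,C_{n-1}\}$. Then for all $l,l_1,l_2\in\{0,\dots,n-1\}$, $\delta(\lambda,C_l)$ and $\beta(\lambda,C_{l_1})-\beta(\lambda,C_{l_2})$ are congruent modulo $2\pi$ to integer multiples of $\frac{\pi}{N}$.
   Context: For $\varphi\in\mathbb{R}$, $E_\varphi=\cos\varphi X+\sin\varphi Y$ is the equatorial measurement, with $+1$ eigenvector $|\varphi\rangle=\frac{1}{\sqrt2}(|0\rangle+e^{i\varphi}|1\rangle)$ and $-1$ eigenvector $|\varphi+\pi\rangle$; outcomes $+1,-1$ relabelled $0,1$; measurements identified with angles. A measurement scenario $\mathcal{M}=(M_1,M_2,M_3)$ consists of finite nonempty sets $M_i\subseteq[0,\pi)$ of angles for qubit $i$. For a three-qubit state $|\psi\rangle$, the event $(A,B,C)\to(a,b,c)$ with $(A,B,C)\in M_1\times M_2\times M_3$ is impossible if $(\langle A+a\pi|\otimes\langle B+b\pi|\otimes\langle C+c\pi|)|\psi\rangle=0$. For $\lambda\in[0,\frac{\pi}{2})$, $|v_\lambda\rangle=\cos\frac{\lambda}{2}|0\rangle+\sin\frac{\lambda}{2}|1\rangle$, $|w_\lambda\rangle=\sin\frac{\lambda}{2}|0\rangle+\cos\frac{\lambda}{2}|1\rangle$, and the interpolant state is $|B(\lambda)\rangle=\frac{1}{\sqrt2}(|00\rangle|v_\lambda\rangle+|11\rangle|w_\lambda\rangle)$.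 $(|B(\lambda)\rangle,\mathcal{M})$ is maximally impossible if for every $C\in M_3$ and $z\in\{0,1\}$: every $A\in M_1$ admits $B\in M_2$, $a,b\in\{0,1\}$ with $(A,B,C)\to(a,b,z)$ impossible, and every $B\in M_2$ admits $A\in M_1$, $a,b$ with $(A,B,C)\to(a,b,z)$ impossible. Define modulo $2\pi$: $\beta(\lambda,\varphi)=\varphi-2\arctan\left(\frac{\cos\frac{\lambda}{2}\sin\varphi}{\sin\frac{\lambda}{2}+\cos\frac{\lambda}{2}\cos\varphi}\right)$ and $\delta(\lambda,\varphi)=\beta(\lambda,\varphi+\pi)-\beta(\lambda,\varphi)$. *)

(* Defs.v *)
From Stdlib Require Import Reals ZArith List.
From Coquelicot Require Import Coquelicot.
Open Scope R_scope.

Definition cexpi (t : R) : C := (cos t, sin t).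

(* A three-qubit state, given by its amplitudes on |x y z>, false = 0, true = 1. *)
Definition state3 := bool -> bool -> bool -> C.

(* <phi| applied to the basis ket |x>, where
   |phi> = 1/sqrt2 (|0> + e^{i phi} |1>) *)
Definition eq_bra (phi : R) (x : bool) : C :=
  if x then Cmult (RtoC (/ sqrt 2)) (cexpi (- phi)) else RtoC (/ sqrt 2).

(* outcome bit a : false = outcome 0 (eigenvalue +1), true = outcome 1 *)
Definition bit (a : bool) : R := if a then 1 else 0.

Definition sumb (f : bool -> C) : C := Cplus (f false) (f true).

(* (<A + a pi| (x) <B + b pi| (x) <C + c pi|) |psi> *)
Definition amplitude (psi : state3) (A B Cm : R) (a b c : bool) : C :=
  sumb (fun x => sumb (fun y => sumb (fun z =>
    Cmult (Cmult (eq_bra (A + bit a * PI) x) (eq_bra (B + bit b * PI) y))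
          (Cmult (eq_bra (Cm + bit c * PI) z) (psi x y z))))).

Definition impossible (psi : state3) (A B Cm : R) (a b c : bool) : Prop :=
  amplitude psi A B Cm a b c = RtoC 0.

Definition v_lam (lam : R) (z : bool) : R :=
  if z then sin (lam / 2) else cos (lam / 2).
Definition w_lam (lam : R) (z : bool) : R :=
  if z then cos (lam / 2) else sin (lam / 2).

Definition B_state (lam : R) : state3 := fun x y z =>
  match x, y with
  | false, false => RtoC (/ sqrt 2 * v_lam lam z)
  | true, true => RtoC (/ sqrt 2 * w_lam lam z)
  | _, _ => RtoC 0
  end.

(* A finite nonempty set of angles in [0, pi), represented as a duplicate-free list. *)
Definition angle_set (M : list R) : Prop :=
  M <> nil /\ NoDup M /\ (forall x, In x M -> 0 <= x < PI).

Definition maximally_impossible (psi : state3) (M1 M2 M3 : list R) : Prop :=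
  forall Cm z, In Cm M3 ->
    (forall A, In A M1 -> exists B a b, In B M2 /\ impossible psi A B Cm a b z) /\
    (forall B, In B M2 -> exists A a b, In A M1 /\ impossible psi A B Cm a b z).

(* beta(lambda, phi) = phi - 2 arctan(y/x), a real representative of a class mod 2 pi;
   when x = 0 (then y <> 0) we use the value pi, the common limit mod 2 pi
   of 2 arctan(y/x) (equivalently 2 arg(x + i y) mod 2 pi). *)
Definition beta (lam phi : R) : R :=
  let y := cos (lam / 2) * sin phi in
  let x := sin (lam / 2) + cos (lam / 2) * cos phi in
  phi - (if Req_EM_T x 0 then PI else 2 * atan (y / x)).

Definition delta (lam phi : R) : R := beta lam (phi + PI) - beta lam phi.

Definition cong_mod_2pi (x y : R) : Prop := exists m : Z, x = y + 2 * PI * IZR m.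

Definition mult_pi_over (N : nat) (x : R) : Prop :=
  exists k : Z, cong_mod_2pi x (IZR k * (PI / INR N)).

(* Main.v *)
Require Import Defs.
From Stdlib Require Import Reals ZArith List Lra Lia.
From Coquelicot Require Import Coquelicot.
Open Scope R_scope.

Lemma amp_fst lam A B Cm a b z :
  let al := A + bit a * PI in let be := B + bit b * PI in let ga := Cm + bit z * PI in
  let c := cos (lam/2) in let s := sin (lam/2) in let r := / sqrt 2 in
  fst (amplitude (B_state lam) A B Cm a b z) =
   r*r*r*r * (c + s * cos ga + s * cos (al + be) + c * cos (al + be + ga)).
Proof.
intros. unfold amplitude, sumb, eq_bra, B_state, cexpi, v_lam, w_lam. simpl.
fold al be ga c s r.
rewrite ?cos_plus, ?sin_plus, ?cos_neg, ?sin_neg, ?cos_plus, ?sin_plus. ring.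
Qed.

Lemma amp_snd lam A B Cm a b z :
  let al := A + bit a * PI in let be := B + bit b * PI in let ga := Cm + bit z * PI in
  let c := cos (lam/2) in let s := sin (lam/2) in let r := / sqrt 2 in
  snd (amplitude (B_state lam) A B Cm a b z) =
   - (r*r*r*r) * (s * sin ga + s * sin (al + be) + c * sin (al + be + ga)).
Proof.
intros. unfold amplitude, sumb, eq_bra, B_state, cexpi, v_lam, w_lam. simpl.
fold al be ga c s r.
rewrite ?cos_plus, ?sin_plus, ?cos_neg, ?sin_neg, ?cos_plus, ?sin_plus. ring.
Qed.
Lemma key (c s g al : R) :
  c + s * cos g + s * cos al + c * cos (al + g) = 0 ->
  s * sin g + s * sin al + c * sin (al + g) = 0 ->
  let x := s + c * cos g in let y := c * sin g in
  sin (g - al) * (x*x - y*y) - 2 * x * y * cos (g - al) = 0.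
Proof.
intros R0 I0 x y.
rewrite cos_plus in R0. rewrite sin_plus in I0. rewrite sin_minus, cos_minus.
assert (P := sin2_cos2 g). unfold Rsqr in P.
set (cg := cos g) in *. set (sg := sin g) in *. set (ca := cos al) in *. set (sa := sin al) in *.
set (cp := cg*ca + sg*sa). set (sp := sg*ca - cg*sa).
assert (HX : x*(1+cp) + y*sp = 0).
{ transitivity ((c + s * cg + s * ca + c * (ca * cg - sa * sg))*cg
     + (s * sg + s * sa + c * (sa * cg + ca * sg))*sg - s*(sg*sg+cg*cg-1)).
  unfold x, y, cp, sp; ring. rewrite R0, I0, P; ring. }
assert (HY : y*(1-cp) + x*sp = 0).
{ transitivity ((c + s * cg + s * ca + c * (ca * cg - sa * sg))*sg
     - (s * sg + s * sa + c * (sa * cg + ca * sg))*cg).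
  unfold x, y, cp, sp; ring. rewrite R0, I0; ring. }
transitivity (x*(y*(1-cp) + x*sp) - y*(x*(1+cp) + y*sp)).
unfold cp, sp; ring. rewrite HX, HY; ring.
Qed.

Lemma hnz lam g : 0 <= lam < PI / 2 ->
  let x := sin (lam/2) + cos (lam/2) * cos g in let y := cos (lam/2) * sin g in
  x = 0 -> y <> 0.
Proof.
intros Hl x y Hx Hy.
assert (Hs : 0 <= sin (lam/2)) by (apply sin_ge_0; lra).
assert (Hc : sin (lam/2) < cos (lam/2)).
{ assert (H := cos_gt_0 (lam/2 + PI/4)). rewrite cos_plus, cos_PI4, sin_PI4 in H.
  assert (0 < sqrt 2) by (apply sqrt_lt_R0; lra).
  assert (0 < (cos (lam / 2) - sin (lam / 2)) * (1 / sqrt 2)) by (rewrite Rmult_minus_distr_r; apply H; lra).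
  assert (0 < 1 / sqrt 2) by (apply Rdiv_lt_0_compat; lra).
  nra. }
assert (P := sin2_cos2 g). unfold Rsqr in P.
assert (Hcg := COS_bound g).
unfold x, y in *.
assert (sin g = 0) by nra.
assert (cos g = 1 \/ cos g = -1) as [E|E].
{ assert ((cos g - 1) * (cos g + 1) = 0) by nra. apply Rmult_integral in H0. lra. }
all: rewrite E in Hx; nra.
Qed.

Lemma sinD (lam g p : R) :
  let x := sin (lam/2) + cos (lam/2) * cos g in let y := cos (lam/2) * sin g in
  (x = 0 -> y <> 0) ->
  sin p * (x*x - y*y) - 2 * x * y * cos p = 0 ->
  sin (p - (if Req_EM_T x 0 then PI else 2 * atan (y / x))) = 0.
Proof.
intros x y Hy E. destruct (Req_EM_T x 0) as [H0|H0].
- rewrite sin_minus, cos_PI, sin_PI. specialize (Hy H0).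
  rewrite H0 in E. assert (sin p * (y*y) = 0) by lra.
  apply Rmult_integral in H as [H|H]. rewrite H; ring. exfalso. apply Hy. nra.
- set (a := atan (y/x)).
  assert (Ha : 0 < cos a) by (apply cos_gt_0; unfold a; destruct (atan_bound (y/x)); lra).
  assert (Ht : sin a = y / x * cos a).
  { assert (T := tan_atan (y/x)). fold a in T. unfold tan in T. rewrite <- T. field. lra. }
  rewrite sin_minus, cos_2a, sin_2a, Ht.
  transitivity (cos a * cos a / (x*x) * (sin p * (x*x - y*y) - 2 * x * y * cos p)).
  field. exact H0. rewrite E. ring.
Qed.

Lemma imp_cong lam A B Cm a b z : 0 <= lam < PI / 2 ->
  impossible (B_state lam) A B Cm a b z ->
  exists k : Z, A + B = beta lam (Cm + bit z * PI) + IZR k * PI.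
Proof.
intros Hl Hi. unfold impossible in Hi.
assert (F := amp_fst lam A B Cm a b z). assert (S := amp_snd lam A B Cm a b z).
rewrite Hi in F, S. simpl in F, S.
set (r := / sqrt 2) in *.
assert (Hr : r <> 0) by (unfold r; apply Rinv_neq_0_compat; apply Rgt_not_eq; apply sqrt_lt_R0; lra).
assert (Hr4 : r*r*r*r <> 0) by (repeat apply Rmult_integral_contrapositive_currified; auto).
set (al := A + bit a * PI) in *. set (be := B + bit b * PI) in *. set (ga := Cm + bit z * PI) in *.
assert (R0 : cos (lam/2) + sin (lam/2) * cos ga + sin (lam/2) * cos (al + be) + cos (lam/2) * cos (al + be + ga) = 0).
{ apply (Rmult_eq_reg_l (r*r*r*r)); auto. lra. }
assert (I0 : sin (lam/2) * sin ga + sin (lam/2) * sin (al + be) + cos (lam/2) * sin (al + be + ga) = 0).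
{ apply (Rmult_eq_reg_l (r*r*r*r)); auto. lra. }
assert (E := key _ _ _ _ R0 I0). simpl in E.
assert (Hs := sinD lam ga (ga - (al + be)) (hnz lam ga Hl) E).
apply sin_eq_0_0 in Hs as [k Hk].
unfold beta. fold ga.
unfold al, be in Hk. destruct a, b; simpl in Hk.
- exists (- k - 2)%Z. rewrite minus_IZR, opp_IZR. simpl. lra.
- exists (- k - 1)%Z. rewrite minus_IZR, opp_IZR. simpl. lra.
- exists (- k - 1)%Z. rewrite minus_IZR, opp_IZR. simpl. lra.
- exists (- k)%Z. rewrite opp_IZR. lra.
Qed.
Definition sumR (l : list R) := fold_right Rplus 0 l.
Lemma sumR_app l1 l2 : sumR (l1 ++ l2) = sumR l1 + sumR l2.
Proof. induction l1; simpl; [ring | rewrite IHl1; ring]. Qed.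

Lemma same_mod A A' k k' : 0 <= A < PI -> 0 <= A' < PI ->
  A' - A = (IZR k' - IZR k) * PI -> A' = A.
Proof.
intros H1 H2 H. assert (HP := PI_RGT_0).
assert (-1 < IZR k' - IZR k < 1) as [L U] by (split; nra).
rewrite <- minus_IZR in L, U. apply lt_IZR in L, U.
assert (k' - k = 0)%Z by lia. rewrite <- minus_IZR, H0 in H. lra.
Qed.

Lemma sum_lemma (M1 : list R) : forall M2 t, NoDup M1 -> NoDup M2 ->
  (forall x, In x M1 -> 0 <= x < PI) -> length M1 = length M2 ->
  (forall A, In A M1 -> exists B k, In B M2 /\ A + B = t + IZR k * PI) ->
  exists m : Z, sumR M1 + sumR M2 = INR (length M1) * t + IZR m * PI.
Proof.
induction M1 as [|A M1 IH]; intros M2 t N1 N2 R1 L H.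
- destruct M2; [|discriminate]. exists 0%Z. simpl. ring.
- destruct (H A (or_introl eq_refl)) as [B [k [HB Hk]]].
  destruct (in_split _ _ HB) as [l1 [l2 E]]. subst M2.
  inversion N1; subst.
  destruct (IH (l1 ++ l2) t H3 (NoDup_remove_1 _ _ _ N2)) as [m Hm].
  + intros; apply R1; now right.
  + simpl in L. rewrite !length_app in *. simpl in L. lia.
  + intros A' HA'. destruct (H A' (or_intror HA')) as [B' [k' [HB' Hk']]].
    exists B', k'. split; auto.
    apply in_app_iff in HB'. simpl in HB'. destruct HB' as [?|[?|?]]; try (apply in_app_iff; tauto).
    subst B'. exfalso. assert (A' = A).
    { apply (same_mod A A' k k'); auto. apply R1; now left. apply R1; now right. lra. }
    subst; tauto.
  + exists (m + k)%Z. rewrite sumR_app in *. simpl sumR. simpl length.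
    rewrite S_INR, plus_IZR. simpl sumR in Hm. lra.
Qed.

Theorem lemma14 (lam : R) (M1 M2 M3 : list R) (N : nat) :
  0 <= lam < PI / 2 ->
  angle_set M1 -> angle_set M2 -> angle_set M3 ->
  length M1 = N -> length M2 = N ->
  maximally_impossible (B_state lam) M1 M2 M3 ->
  (forall Cl, In Cl M3 -> mult_pi_over N (delta lam Cl)) /\
  (forall C1 C2, In C1 M3 -> In C2 M3 ->
     mult_pi_over N (beta lam C1 - beta lam C2)).
Proof.
intros Hl [Ne1 [N1 R1]] [Ne2 [N2 R2]] _ L1 L2 MI.
assert (HN : INR N <> 0).
{ apply not_0_INR. intro. subst N. destruct M1; [congruence | discriminate]. }
assert (K : forall Cm z, In Cm M3 -> exists m : Z,
   sumR M1 + sumR M2 = INR N * beta lam (Cm + bit z * PI) + IZR m * PI).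
{ intros Cm z HC. rewrite <- L1. apply sum_lemma; auto. congruence.
  intros A HA. destruct (proj1 (MI Cm z HC) A HA) as [B [a [b [HB Hi]]]].
  destruct (imp_cong _ _ _ _ _ _ _ Hl Hi) as [k Hk]. exists B, k. split; auto.
  }
assert (D : forall u v m1 m2, sumR M1 + sumR M2 = INR N * u + IZR m1 * PI ->
   sumR M1 + sumR M2 = INR N * v + IZR m2 * PI -> mult_pi_over N (u - v)).
{ intros u v m1 m2 E1 E2. exists (m2 - m1)%Z. exists 0%Z. rewrite minus_IZR.
  apply (Rmult_eq_reg_l (INR N)); auto. field_simplify; auto. lra. }
split.
- intros Cl HC. destruct (K Cl true HC) as [m1 E1]. destruct (K Cl false HC) as [m2 E2].
  simpl in E1, E2. rewrite Rmult_1_l in E1. rewrite Rmult_0_l, Rplus_0_r in E2.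
  unfold delta. eapply D; eauto.
- intros C1 C2 H1 H2. destruct (K C1 false H1) as [m1 E1]. destruct (K C2 false H2) as [m2 E2].
  simpl in E1, E2. rewrite Rmult_0_l, Rplus_0_r in E1, E2. eapply D; eauto.
Qed.
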